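(* Let $1<w\le 2$, $1<h\le 2$, $n\ge 2$, and $\frac12\le y_1<\dots<y_n\le h-\frac12$; put $\Delta y_i=y_{i+1}-y_i$. Consider the linear program in variables $g,\Delta x_1,\dots,\Delta x_{n-1}$: maximize $g$ subject to $\Delta x_i+\Delta y_i\ge g$ for $i=1,\dots,n-1$, $\sum_{i=1}^{n-1}\Delta x_i\le w-1$, and $\Delta x_i\ge 0$ for $i=1,\dots,n-1$. (1) If $\mathcal A$ is a reasonable layout of this instance with gap $\gamma$, then the linear program has a feasible solution with value $g\ge\gamma$. (2) Conversely, for every feasible solution of the linear program with value $g$ and every $\delta>0$, there exists a proper staircase $\mathcal A'$ of this instance with gap at least $g-\delta$.
   Context: The instance is the strip $T=[0,w]\times[0,h]$ with the given $y_i$. A layout is a pair $(\mathbf x,\prec)$ where $\mathbf x=(x_1,\dots,x_n)$ with $x_i\in[\frac12,w-\frac12]$, and $\prec$ is a total order (stacking order) on the squares $s_1,\dots,s_n$, where $s_i$ is the closed axis-parallel unit square with centre $(x_i,y_i)$. If $s_i\prec s_j$ we say $s_j$ is in front of $s_i$ and $s_i$ is behind $s_j$. A point $p$ on the boundary of $s_i$ is visible if every square $s_j$ ($j\neq i$) containing $p$ is behind $s_i$. The visible perimeter of $s_i$ is the total length of its visible boundary points; the gap of $s_i$ is its visible perimeter minus $2$, the gap of a layout is the minimum of the gaps of its squares, and a layout is reasonable if its gap is positive. A proper staircase is a layout with $x_1<x_2<\dots<x_n$ and $s_1\prec s_2\prec\dots\prec s_n$. *)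

(* Defs.v *)
From HB Require Import structures.
From mathcomp Require Import all_boot all_order all_algebra all_fingroup.
From mathcomp Require Import all_classical all_reals all_analysis.
Set Implicit Arguments. Unset Strict Implicit. Unset Printing Implicit Defensive.
Import Order.TTheory GRing.Theory Num.Theory.
Local Open Scope ring_scope.
Local Open Scope classical_set_scope.

(* Squares are indexed by 'I_n (paper's s_1..s_n become indices 0..n-1).
   A stacking order is represented by a permutation s : {perm 'I_n}:
   s_i is behind s_j iff (s i < s j)%N. *)

Definition in_square (R : realType) (cx cy : R) (p : R * R) : Prop :=
  `|p.1 - cx| <= 2^-1 /\ `|p.2 - cy| <= 2^-1.

Definition visible (R : realType) (n : nat) (y x : 'I_n -> R) (s : {perm 'I_n})
  (i : 'I_n) (p : R * R) : Prop :=
  forall j : 'I_n, j != i -> in_square (x j) (y j) p -> (s j < s i)%N.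

Definition edge_visible (R : realType) (n : nat) (y x : 'I_n -> R)
  (s : {perm 'I_n}) (i : 'I_n) (e : R -> R * R) : \bar R :=
  (@lebesgue_measure R) [set t : R | 0 <= t <= 1 /\ visible y x s i (e t)].

Definition visible_perimeter (R : realType) (n : nat) (y x : 'I_n -> R)
  (s : {perm 'I_n}) (i : 'I_n) : R :=
  let eb := fun t : R => (x i - 2^-1 + t, y i - 2^-1) in
  let et := fun t : R => (x i - 2^-1 + t, y i + 2^-1) in
  let el := fun t : R => (x i - 2^-1, y i - 2^-1 + t) in
  let er := fun t : R => (x i + 2^-1, y i - 2^-1 + t) in
  fine (edge_visible y x s i eb + edge_visible y x s i et +
        edge_visible y x s i el + edge_visible y x s i er)%E.

Definition sq_gap (R : realType) (n : nat) (y x : 'I_n -> R)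
  (s : {perm 'I_n}) (i : 'I_n) : R :=
  visible_perimeter y x s i - 2.

Definition layout_gap (R : realType) (n : nat) (y x : 'I_n -> R)
  (s : {perm 'I_n}) : \bar R :=
  \big[Order.min/+oo%E]_(i < n) (sq_gap y x s i)%:E.

Definition reasonable (R : realType) (n : nat) (y x : 'I_n -> R)
  (s : {perm 'I_n}) : Prop := (0 < layout_gap y x s)%E.

Definition is_layout (R : realType) (n : nat) (w : R) (x : 'I_n -> R) : Prop :=
  forall i : 'I_n, 2^-1 <= x i <= w - 2^-1.

Definition proper_staircase (R : realType) (n : nat) (x : 'I_n -> R)
  (s : {perm 'I_n}) : Prop :=
  forall i j : 'I_n, (i < j)%N -> x i < x j /\ (s i < s j)%N.

(* LP feasibility: dx i is Delta x_i (only indices i with a successor matter) *)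
Definition lp_feasible (R : realType) (n : nat) (y : 'I_n -> R) (w g : R)
  (dx : 'I_n -> R) : Prop :=
  (forall i j : 'I_n, val j = (val i).+1 -> g <= dx i + (y j - y i) /\ 0 <= dx i)
  /\ \sum_(i < n | ((val i).+1 < n)%N) dx i <= w - 1.

(* Main.v *)
Require Import Defs.
From HB Require Import structures.
From mathcomp Require Import all_boot all_order all_algebra all_fingroup.
From mathcomp Require Import all_classical all_reals all_analysis.
From mathcomp Require Import lra.
Set Implicit Arguments. Unset Strict Implicit. Unset Printing Implicit Defensive.
Import Order.TTheory GRing.Theory Num.Theory.
Local Open Scope ring_scope.
Local Open Scope classical_set_scope.

Lemma leb_mono (R : realType) (A B : set R) : A `<=` B ->
  ((@lebesgue_measure R) A <= (@lebesgue_measure R) B)%E.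
Proof.
move=> AB. rewrite /lebesgue_measure /lebesgue_stieltjes_measure /measure_extension.
exact: le_mu_ext.
Qed.

Lemma em_le (R : realType) (P : R -> Prop) (a b : R) :
  (forall t, 0 <= t <= 1 -> P t -> a <= t <= b) ->
  ((@lebesgue_measure R) [set t | (0 <= t <= 1)%R /\ P t] <= (Num.max 0 (b - a))%:E)%E.
Proof.
move=> H.
apply: (@le_trans _ _ ((@lebesgue_measure R) (`[a, b] : set R))).
  apply: leb_mono => t [] h1 h2 /=; rewrite in_itv /=; exact: H.
rewrite lebesgue_measure_itv.
rewrite /= lte_fin.
case: ifP => _; rewrite lee_fin.
  by rewrite le_max lexx orbT.
by rewrite le_max lexx.
Qed.

Lemma em_le1 (R : realType) (P : R -> Prop) :
  ((@lebesgue_measure R) [set t | (0 <= t <= 1)%R /\ P t] <= 1%:E)%E.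
Proof.
apply: (@le_trans _ _ (Num.max 0 (1 - 0))%:E); first by apply: em_le => t h _; rewrite h.
by rewrite lee_fin subr0 ge_max ler01 lexx.
Qed.

Lemma em_ge0 (R : realType) (A : set R) :
  (0 <= (@lebesgue_measure R) A)%E.
Proof. exact: measure_ge0. Qed.

Lemma em_ge (R : realType) (P : R -> Prop) (a b : R) : a <= b ->
  (forall t, a <= t < b -> 0 <= t <= 1 /\ P t) ->
  ((b - a)%:E <= (@lebesgue_measure R) [set t | (0 <= t <= 1)%R /\ P t])%E.
Proof.
move=> ab H.
apply: (@le_trans _ _ ((@lebesgue_measure R) (`[a, b[ : set R))); last first.
  apply: leb_mono => t /=; rewrite in_itv /=; exact: H.
rewrite lebesgue_measure_itv /= lte_fin.
case: ltP => hab; first by [].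
have -> : b = a by apply/eqP; rewrite eq_le ab hab.
by rewrite subrr.
Qed.

Lemma fin01 (R : realType) (A : \bar R) : (0 <= A)%E -> (A <= 1%:E)%E -> A = (fine A)%:E.
Proof. by case: A. Qed.

Definition eB (R : realType) n (x y : 'I_n -> R) i := fun t : R => (x i - 2^-1 + t, y i - 2^-1).
Definition eT (R : realType) n (x y : 'I_n -> R) i := fun t : R => (x i - 2^-1 + t, y i + 2^-1).
Definition eL (R : realType) n (x y : 'I_n -> R) i := fun t : R => (x i - 2^-1, y i - 2^-1 + t).
Definition eR (R : realType) n (x y : 'I_n -> R) i := fun t : R => (x i + 2^-1, y i - 2^-1 + t).

Lemma vp_eq (R : realType) n (y x : 'I_n -> R) s i :
  visible_perimeter y x s i = fine (edge_visible y x s i (eB x y i) +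
    edge_visible y x s i (eT x y i) + edge_visible y x s i (eL x y i) +
    edge_visible y x s i (eR x y i))%E.
Proof. by []. Qed.

Lemma ev0 (R : realType) n (y x : 'I_n -> R) s i e :
  (0 <= edge_visible y x s i e)%E.
Proof. exact: em_ge0. Qed.
Lemma ev1 (R : realType) n (y x : 'I_n -> R) s i e :
  (edge_visible y x s i e <= 1%:E)%E.
Proof. exact: em_le1. Qed.

Lemma fine4_le (R : realType) (A B C D : \bar R) (a b c d : R) :
  (0 <= A)%E -> (A <= 1%:E)%E -> (0 <= B)%E -> (B <= 1%:E)%E ->
  (0 <= C)%E -> (C <= 1%:E)%E -> (0 <= D)%E -> (D <= 1%:E)%E ->
  (A <= a%:E)%E -> (B <= b%:E)%E -> (C <= c%:E)%E -> (D <= d%:E)%E ->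
  fine (A + B + C + D)%E <= a + b + c + d.
Proof.
move=> A0 A1 B0 B1 C0 C1 D0 D1.
rewrite (fin01 A0 A1) (fin01 B0 B1) (fin01 C0 C1) (fin01 D0 D1) !lee_fin /= => *.
by rewrite !lerD.
Qed.

Lemma fine4_ge (R : realType) (A B C D : \bar R) (a b c d : R) :
  (0 <= A)%E -> (A <= 1%:E)%E -> (0 <= B)%E -> (B <= 1%:E)%E ->
  (0 <= C)%E -> (C <= 1%:E)%E -> (0 <= D)%E -> (D <= 1%:E)%E ->
  (a%:E <= A)%E -> (b%:E <= B)%E -> (c%:E <= C)%E -> (d%:E <= D)%E ->
  a + b + c + d <= fine (A + B + C + D)%E.
Proof.
move=> A0 A1 B0 B1 C0 C1 D0 D1.
rewrite (fin01 A0 A1) (fin01 B0 B1) (fin01 C0 C1) (fin01 D0 D1) !lee_fin /= => *.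
by rewrite !lerD.
Qed.

Lemma vp_le (R : realType) n (y x : 'I_n -> R) s i (b t l r : R) :
  (edge_visible y x s i (eB x y i) <= b%:E)%E ->
  (edge_visible y x s i (eT x y i) <= t%:E)%E ->
  (edge_visible y x s i (eL x y i) <= l%:E)%E ->
  (edge_visible y x s i (eR x y i) <= r%:E)%E ->
  sq_gap y x s i <= b + t + l + r - 2.
Proof.
move=> *; rewrite /sq_gap vp_eq lerD2r.
by apply: fine4_le => //; solve [exact: ev0 | exact: ev1].
Qed.

Lemma vp_ge (R : realType) n (y x : 'I_n -> R) s i (b t l r : R) :
  (b%:E <= edge_visible y x s i (eB x y i))%E ->
  (t%:E <= edge_visible y x s i (eT x y i))%E ->
  (l%:E <= edge_visible y x s i (eL x y i))%E ->
  (r%:E <= edge_visible y x s i (eR x y i))%E ->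
  b + t + l + r - 2 <= sq_gap y x s i.
Proof.
move=> *; rewrite /sq_gap vp_eq lerD2r.
by apply: fine4_ge => //; solve [exact: ev0 | exact: ev1].
Qed.

Lemma absle (R : realType) (a : R) : -(2^-1) <= a <= 2^-1 -> `|a| <= 2^-1.
Proof. by rewrite ler_norml. Qed.

Lemma cT (R : realType) n (y x : 'I_n -> R) (s : {perm 'I_n}) i j t :
  j != i -> (s i < s j)%N -> 0 <= y j - y i <= 1 ->
  visible y x s i (eT x y i t) -> t < x j - x i \/ x j - x i + 1 < t.
Proof.
move=> ji sij hy V.
case: (ltrP t (x j - x i)) => h1; first by left.
case: (ltrP (x j - x i + 1) t) => h2; first by right.
exfalso.
have := V j ji; rewrite /in_square /eT /= => H.
have : (s j < s i)%N.
  apply: H; split; apply: absle; move/andP: hy => [hy1 hy2]; apply/andP; split; lra.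
by rewrite ltnNge (ltnW sij).
Qed.

Lemma cB (R : realType) n (y x : 'I_n -> R) (s : {perm 'I_n}) i j t :
  j != i -> (s i < s j)%N -> -1 <= y j - y i <= 0 ->
  visible y x s i (eB x y i t) -> t < x j - x i \/ x j - x i + 1 < t.
Proof.
move=> ji sij hy V.
case: (ltrP t (x j - x i)) => h1; first by left.
case: (ltrP (x j - x i + 1) t) => h2; first by right.
exfalso.
have := V j ji; rewrite /in_square /eB /= => H.
have : (s j < s i)%N.
  apply: H; split; apply: absle; move/andP: hy => [hy1 hy2]; apply/andP; split; lra.
by rewrite ltnNge (ltnW sij).
Qed.

Lemma cL (R : realType) n (y x : 'I_n -> R) (s : {perm 'I_n}) i j t :
  j != i -> (s i < s j)%N -> -1 <= x j - x i <= 0 ->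
  visible y x s i (eL x y i t) -> t < y j - y i \/ y j - y i + 1 < t.
Proof.
move=> ji sij hy V.
case: (ltrP t (y j - y i)) => h1; first by left.
case: (ltrP (y j - y i + 1) t) => h2; first by right.
exfalso.
have := V j ji; rewrite /in_square /eL /= => H.
have : (s j < s i)%N.
  apply: H; split; apply: absle; move/andP: hy => [hy1 hy2]; apply/andP; split; lra.
by rewrite ltnNge (ltnW sij).
Qed.

Lemma cR (R : realType) n (y x : 'I_n -> R) (s : {perm 'I_n}) i j t :
  j != i -> (s i < s j)%N -> 0 <= x j - x i <= 1 ->
  visible y x s i (eR x y i t) -> t < y j - y i \/ y j - y i + 1 < t.
Proof.
move=> ji sij hy V.
case: (ltrP t (y j - y i)) => h1; first by left.
case: (ltrP (y j - y i + 1) t) => h2; first by right.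
exfalso.
have := V j ji; rewrite /in_square /eR /= => H.
have : (s j < s i)%N.
  apply: H; split; apply: absle; move/andP: hy => [hy1 hy2]; apply/andP; split; lra.
by rewrite ltnNge (ltnW sij).
Qed.

Lemma evle (R : realType) n (y x : 'I_n -> R) s i e (a b c : R) :
  (forall t, 0 <= t <= 1 -> visible y x s i (e t) -> a <= t <= b) ->
  0 <= c -> b - a <= c -> (edge_visible y x s i e <= c%:E)%E.
Proof.
move=> H c0 bc; apply: (le_trans (em_le H)); rewrite lee_fin ge_max c0 /=; done.
Qed.

Lemma evle1 (R : realType) n (y x : 'I_n -> R) s i e :
  (edge_visible y x s i e <= 1%:E)%E.
Proof. exact: ev1. Qed.

Close Scope classical_set_scope.

Ltac ab := apply/andP; split; lra.
Ltac pv := move=> t /andP[t0 t1] V.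
Ltac r1 H c c2 a b := let h := fresh "h" in case: H => h; clear -a b c c2 h; ab.
Ltac r2 H c c2 H' c' c2' a b := let h := fresh "h" in let h' := fresh "h'" in
  case: H => h; case: H' => h'; clear -a b c c' c2 c2' h h'; ab.

Lemma G_above (R : realType) n (y x : 'I_n -> R) (s : {perm 'I_n}) (i j k : 'I_n) gam :
  (forall a b, x a - x b <= 1) -> (forall a b, y a - y b <= 1) ->
  gam <= sq_gap y x s i ->
  j != i -> (s i < s j)%N -> k != i -> (s i < s k)%N ->
  y i < y j -> y k != y i ->
  (x j <= x i <= x k) \/ (x k <= x i <= x j) ->
  gam <= y j - y i.
Proof.
move=> hx hy Hg fj sj fk sk yij ykn hxs.
have hxjk := hx j k; have hxkj := hx k j; have hyj := hy j i; have hyk1 := hy k i;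
have hyk2 := hy i k.
apply: (le_trans Hg).
have [ykl|ykg|yke] := ltgtP (y k) (y i); last by rewrite yke eqxx in ykn.
- case: hxs => /andP[h1 h2].
  +
    have cj1 : 0 <= y j - y i <= 1 by ab.
    have cj2 : -1 <= x j - x i <= 0 by ab.
    have ck1 : -1 <= y k - y i <= 0 by ab.
    have ck2 : 0 <= x k - x i <= 1 by ab.
    apply: le_trans (vp_le (b := x k - x i) (t := - (x j - x i)) (l := y j - y i)
       (r := - (y k - y i)) _ _ _ _) _; last lra.
    * apply: (evle (a := 0) (b := x k - x i)); last lra; last lra; move=> t /andP[t0 t1] V.
      r1 (cB fk sk ck1 V) ck1 ck2 t0 t1.
    * apply: (evle (a := 1 + (x j - x i)) (b := 1)); last lra; last lra; move=> t /andP[t0 t1] V.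
      r1 (cT fj sj cj1 V) cj1 cj2 t0 t1.
    * apply: (evle (a := 0) (b := y j - y i)); last lra; last lra; move=> t /andP[t0 t1] V.
      r1 (cL fj sj cj2 V) cj2 cj1 t0 t1.
    * apply: (evle (a := 1 + (y k - y i)) (b := 1)); last lra; last lra; move=> t /andP[t0 t1] V.
      r1 (cR fk sk ck2 V) ck2 ck1 t0 t1.
  +
    have cj1 : 0 <= y j - y i <= 1 by ab.
    have cj2 : 0 <= x j - x i <= 1 by ab.
    have ck1 : -1 <= y k - y i <= 0 by ab.
    have ck2 : -1 <= x k - x i <= 0 by ab.
    apply: le_trans (vp_le (b := - (x k - x i)) (t := x j - x i) (l := - (y k - y i))
       (r := y j - y i) _ _ _ _) _; last lra.
    * apply: (evle (a := 1 + (x k - x i)) (b := 1)); last lra; last lra; move=> t /andP[t0 t1] V.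
      r1 (cB fk sk ck1 V) ck1 ck2 t0 t1.
    * apply: (evle (a := 0) (b := x j - x i)); last lra; last lra; move=> t /andP[t0 t1] V.
      r1 (cT fj sj cj1 V) cj1 cj2 t0 t1.
    * apply: (evle (a := 1 + (y k - y i)) (b := 1)); last lra; last lra; move=> t /andP[t0 t1] V.
      r1 (cL fk sk ck2 V) ck2 ck1 t0 t1.
    * apply: (evle (a := 0) (b := y j - y i)); last lra; last lra; move=> t /andP[t0 t1] V.
      r1 (cR fj sj cj2 V) cj2 cj1 t0 t1.
- case: hxs => /andP[h1 h2].
  + have cj1 : 0 <= y j - y i <= 1 by ab.
    have cj2 : -1 <= x j - x i <= 0 by ab.
    have ck1 : 0 <= y k - y i <= 1 by ab.
    have ck2 : 0 <= x k - x i <= 1 by ab.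
    apply: le_trans (vp_le (b := 1) (t := 0) (l := y j - y i) (r := 1) _ _ _ _) _;
      last lra.
    * exact: evle1.
    * apply: (evle (a := 1 + (x j - x i)) (b := x k - x i)); last lra; last lra; move=> t /andP[t0 t1] V.
      r2 (cT fj sj cj1 V) cj1 cj2 (cT fk sk ck1 V) ck1 ck2 t0 t1.
    * apply: (evle (a := 0) (b := y j - y i)); last lra; last lra; move=> t /andP[t0 t1] V.
      r1 (cL fj sj cj2 V) cj2 cj1 t0 t1.
    * exact: evle1.
  + have cj1 : 0 <= y j - y i <= 1 by ab.
    have cj2 : 0 <= x j - x i <= 1 by ab.
    have ck1 : 0 <= y k - y i <= 1 by ab.
    have ck2 : -1 <= x k - x i <= 0 by ab.
    apply: le_trans (vp_le (b := 1) (t := 0) (l := 1) (r := y j - y i) _ _ _ _) _;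
      last lra.
    * exact: evle1.
    * apply: (evle (a := 1 + (x k - x i)) (b := x j - x i)); last lra; last lra; move=> t /andP[t0 t1] V.
      r2 (cT fj sj cj1 V) cj1 cj2 (cT fk sk ck1 V) ck1 ck2 t0 t1.
    * exact: evle1.
    * apply: (evle (a := 0) (b := y j - y i)); last lra; last lra; move=> t /andP[t0 t1] V.
      r1 (cR fj sj cj2 V) cj2 cj1 t0 t1.
Qed.

Lemma G_below (R : realType) n (y x : 'I_n -> R) (s : {perm 'I_n}) (i j k : 'I_n) gam :
  (forall a b, x a - x b <= 1) -> (forall a b, y a - y b <= 1) ->
  gam <= sq_gap y x s i ->
  j != i -> (s i < s j)%N -> k != i -> (s i < s k)%N ->
  y j < y i -> y k != y i ->
  (x j <= x i <= x k) \/ (x k <= x i <= x j) ->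
  gam <= y i - y j.
Proof.
move=> hx hy Hg fj sj fk sk yij ykn hxs.
have hxjk := hx j k; have hxkj := hx k j; have hyj := hy i j; have hyk1 := hy k i;
have hyk2 := hy i k.
apply: (le_trans Hg).
have [ykl|ykg|yke] := ltgtP (y k) (y i); last by rewrite yke eqxx in ykn.
- case: hxs => /andP[h1 h2].
  + have cj1 : -1 <= y j - y i <= 0 by ab.
    have cj2 : -1 <= x j - x i <= 0 by ab.
    have ck1 : -1 <= y k - y i <= 0 by ab.
    have ck2 : 0 <= x k - x i <= 1 by ab.
    apply: le_trans (vp_le (b := 0) (t := 1) (l := - (y j - y i)) (r := 1) _ _ _ _) _;
      last lra.
    * apply: (evle (a := 1 + (x j - x i)) (b := x k - x i)); last lra; last lra; move=> t /andP[t0 t1] V.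
      r2 (cB fj sj cj1 V) cj1 cj2 (cB fk sk ck1 V) ck1 ck2 t0 t1.
    * exact: evle1.
    * apply: (evle (a := 1 + (y j - y i)) (b := 1)); last lra; last lra; move=> t /andP[t0 t1] V.
      r1 (cL fj sj cj2 V) cj2 cj1 t0 t1.
    * exact: evle1.
  + have cj1 : -1 <= y j - y i <= 0 by ab.
    have cj2 : 0 <= x j - x i <= 1 by ab.
    have ck1 : -1 <= y k - y i <= 0 by ab.
    have ck2 : -1 <= x k - x i <= 0 by ab.
    apply: le_trans (vp_le (b := 0) (t := 1) (l := 1) (r := - (y j - y i)) _ _ _ _) _;
      last lra.
    * apply: (evle (a := 1 + (x k - x i)) (b := x j - x i)); last lra; last lra; move=> t /andP[t0 t1] V.
      r2 (cB fj sj cj1 V) cj1 cj2 (cB fk sk ck1 V) ck1 ck2 t0 t1.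
    * exact: evle1.
    * exact: evle1.
    * apply: (evle (a := 1 + (y j - y i)) (b := 1)); last lra; last lra; move=> t /andP[t0 t1] V.
      r1 (cR fj sj cj2 V) cj2 cj1 t0 t1.
- case: hxs => /andP[h1 h2].
  + have cj1 : -1 <= y j - y i <= 0 by ab.
    have cj2 : -1 <= x j - x i <= 0 by ab.
    have ck1 : 0 <= y k - y i <= 1 by ab.
    have ck2 : 0 <= x k - x i <= 1 by ab.
    apply: le_trans (vp_le (b := - (x j - x i)) (t := x k - x i) (l := - (y j - y i))
       (r := y k - y i) _ _ _ _) _; last lra.
    * apply: (evle (a := 1 + (x j - x i)) (b := 1)); last lra; last lra; move=> t /andP[t0 t1] V.
      r1 (cB fj sj cj1 V) cj1 cj2 t0 t1.
    * apply: (evle (a := 0) (b := x k - x i)); last lra; last lra; move=> t /andP[t0 t1] V.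
      r1 (cT fk sk ck1 V) ck1 ck2 t0 t1.
    * apply: (evle (a := 1 + (y j - y i)) (b := 1)); last lra; last lra; move=> t /andP[t0 t1] V.
      r1 (cL fj sj cj2 V) cj2 cj1 t0 t1.
    * apply: (evle (a := 0) (b := y k - y i)); last lra; last lra; move=> t /andP[t0 t1] V.
      r1 (cR fk sk ck2 V) ck2 ck1 t0 t1.
  + have cj1 : -1 <= y j - y i <= 0 by ab.
    have cj2 : 0 <= x j - x i <= 1 by ab.
    have ck1 : 0 <= y k - y i <= 1 by ab.
    have ck2 : -1 <= x k - x i <= 0 by ab.
    apply: le_trans (vp_le (b := x j - x i) (t := - (x k - x i)) (l := y k - y i)
       (r := - (y j - y i)) _ _ _ _) _; last lra.
    * apply: (evle (a := 0) (b := x j - x i)); last lra; last lra; move=> t /andP[t0 t1] V.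
      r1 (cB fj sj cj1 V) cj1 cj2 t0 t1.
    * apply: (evle (a := 1 + (x k - x i)) (b := 1)); last lra; last lra; move=> t /andP[t0 t1] V.
      r1 (cT fk sk ck1 V) ck1 ck2 t0 t1.
    * apply: (evle (a := 0) (b := y k - y i)); last lra; last lra; move=> t /andP[t0 t1] V.
      r1 (cL fk sk ck2 V) ck2 ck1 t0 t1.
    * apply: (evle (a := 1 + (y j - y i)) (b := 1)); last lra; last lra; move=> t /andP[t0 t1] V.
      r1 (cR fj sj cj2 V) cj2 cj1 t0 t1.
Qed.

Lemma G2a (R : realType) n (y x : 'I_n -> R) (s : {perm 'I_n}) (i p j : 'I_n) gam :
  (forall a b, x a - x b <= 1) -> (forall a b, y a - y b <= 1) ->
  gam <= sq_gap y x s i ->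
  p != i -> (s i < s p)%N -> j != i -> (s i < s j)%N ->
  y p < y i -> y j < y i -> x i <= x p -> x i <= x j ->
  gam <= (x j - x i) + (y i - y p).
Proof.
move=> hx hy Hg fp sp fj sj yp yj xp xj.
have := hx p i; have := hx j i; have := hy i p; have := hy i j => *.
apply: (le_trans Hg).
have cp1 : -1 <= y p - y i <= 0 by ab.
have cp2 : 0 <= x p - x i <= 1 by ab.
have cj1 : -1 <= y j - y i <= 0 by ab.
have cj2 : 0 <= x j - x i <= 1 by ab.
apply: le_trans (vp_le (b := x j - x i) (t := 1) (l := 1) (r := - (y p - y i)) _ _ _ _) _;
  last lra.
- apply: (evle (a := 0) (b := x j - x i)); last lra; last lra; move=> t /andP[t0 t1] V.
  r1 (cB fj sj cj1 V) cj1 cj2 t0 t1.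
- exact: evle1.
- exact: evle1.
- apply: (evle (a := 1 + (y p - y i)) (b := 1)); last lra; last lra; move=> t /andP[t0 t1] V.
  r1 (cR fp sp cp2 V) cp2 cp1 t0 t1.
Qed.

Lemma G2b (R : realType) n (y x : 'I_n -> R) (s : {perm 'I_n}) (i p j : 'I_n) gam :
  (forall a b, x a - x b <= 1) -> (forall a b, y a - y b <= 1) ->
  gam <= sq_gap y x s i ->
  p != i -> (s i < s p)%N -> j != i -> (s i < s j)%N ->
  y i < y p -> y i < y j -> x i <= x p -> x i <= x j ->
  gam <= (x j - x i) + (y p - y i).
Proof.
move=> hx hy Hg fp sp fj sj yp yj xp xj.
have := hx p i; have := hx j i; have := hy p i; have := hy j i => *.
apply: (le_trans Hg).
have cp1 : 0 <= y p - y i <= 1 by ab.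
have cp2 : 0 <= x p - x i <= 1 by ab.
have cj1 : 0 <= y j - y i <= 1 by ab.
have cj2 : 0 <= x j - x i <= 1 by ab.
apply: le_trans (vp_le (b := 1) (t := x j - x i) (l := 1) (r := y p - y i) _ _ _ _) _;
  last lra.
- exact: evle1.
- apply: (evle (a := 0) (b := x j - x i)); last lra; last lra; move=> t /andP[t0 t1] V.
  r1 (cT fj sj cj1 V) cj1 cj2 t0 t1.
- exact: evle1.
- apply: (evle (a := 0) (b := y p - y i)); last lra; last lra; move=> t /andP[t0 t1] V.
  r1 (cR fp sp cp2 V) cp2 cp1 t0 t1.
Qed.

Lemma G2c (R : realType) n (y x : 'I_n -> R) (s : {perm 'I_n}) (i p q j : 'I_n) gam :
  (forall a b, x a - x b <= 1) -> (forall a b, y a - y b <= 1) ->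
  gam <= sq_gap y x s i ->
  p != i -> (s i < s p)%N -> q != i -> (s i < s q)%N -> j != i -> (s i < s j)%N ->
  y p < y i -> y i < y q -> y j != y i -> x i <= x p -> x i <= x q -> x i <= x j ->
  gam <= x j - x i.
Proof.
move=> hx hy Hg fp sp fq sq fj sj yp yq yjn xp xq xj.
have := hx p i; have := hx j i; have := hx q i; have := hy q p; have := hy j i;
have := hy i j => *.
apply: (le_trans Hg).
have cp2 : 0 <= x p - x i <= 1 by ab.
have cq2 : 0 <= x q - x i <= 1 by ab.
have cp1 : -1 <= y p - y i <= 0 by ab.
have cq1 : 0 <= y q - y i <= 1 by ab.
have [yjl|yjg|yje] := ltgtP (y j) (y i); last by rewrite yje eqxx in yjn.
- have cj1 : -1 <= y j - y i <= 0 by ab.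
  have cj2 : 0 <= x j - x i <= 1 by ab.
  apply: le_trans (vp_le (b := x j - x i) (t := 1) (l := 1) (r := 0) _ _ _ _) _;
    last lra.
  + apply: (evle (a := 0) (b := x j - x i)); last lra; last lra; move=> t /andP[t0 t1] V.
    r1 (cB fj sj cj1 V) cj1 cj2 t0 t1.
  + exact: evle1.
  + exact: evle1.
  + apply: (evle (a := 1 + (y p - y i)) (b := y q - y i)); last lra; last lra; move=> t /andP[t0 t1] V.
    r2 (cR fp sp cp2 V) cp2 cp1 (cR fq sq cq2 V) cq2 cq1 t0 t1.
- have cj1 : 0 <= y j - y i <= 1 by ab.
  have cj2 : 0 <= x j - x i <= 1 by ab.
  apply: le_trans (vp_le (b := 1) (t := x j - x i) (l := 1) (r := 0) _ _ _ _) _;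
    last lra.
  + exact: evle1.
  + apply: (evle (a := 0) (b := x j - x i)); last lra; last lra; move=> t /andP[t0 t1] V.
    r1 (cT fj sj cj1 V) cj1 cj2 t0 t1.
  + exact: evle1.
  + apply: (evle (a := 1 + (y p - y i)) (b := y q - y i)); last lra; last lra; move=> t /andP[t0 t1] V.
    r2 (cR fp sp cp2 V) cp2 cp1 (cR fq sq cq2 V) cq2 cq1 t0 t1.
Qed.

Lemma G3a (R : realType) n (y x : 'I_n -> R) (s : {perm 'I_n}) (i p j : 'I_n) gam :
  (forall a b, x a - x b <= 1) -> (forall a b, y a - y b <= 1) ->
  gam <= sq_gap y x s i ->
  p != i -> (s i < s p)%N -> j != i -> (s i < s j)%N ->
  y p < y i -> y j < y i -> x p <= x i -> x j <= x i ->
  gam <= (x i - x j) + (y i - y p).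
Proof.
move=> hx hy Hg fp sp fj sj yp yj xp xj.
have := hx i p; have := hx i j; have := hy i p; have := hy i j => *.
apply: (le_trans Hg).
have cp1 : -1 <= y p - y i <= 0 by ab.
have cp2 : -1 <= x p - x i <= 0 by ab.
have cj1 : -1 <= y j - y i <= 0 by ab.
have cj2 : -1 <= x j - x i <= 0 by ab.
apply: le_trans (vp_le (b := x i - x j) (t := 1) (l := - (y p - y i)) (r := 1) _ _ _ _) _;
  last lra.
- apply: (evle (a := 1 + (x j - x i)) (b := 1)); last lra; last lra; move=> t /andP[t0 t1] V.
  r1 (cB fj sj cj1 V) cj1 cj2 t0 t1.
- exact: evle1.
- apply: (evle (a := 1 + (y p - y i)) (b := 1)); last lra; last lra; move=> t /andP[t0 t1] V.
  r1 (cL fp sp cp2 V) cp2 cp1 t0 t1.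
- exact: evle1.
Qed.

Lemma G3b (R : realType) n (y x : 'I_n -> R) (s : {perm 'I_n}) (i p j : 'I_n) gam :
  (forall a b, x a - x b <= 1) -> (forall a b, y a - y b <= 1) ->
  gam <= sq_gap y x s i ->
  p != i -> (s i < s p)%N -> j != i -> (s i < s j)%N ->
  y i < y p -> y i < y j -> x p <= x i -> x j <= x i ->
  gam <= (x i - x j) + (y p - y i).
Proof.
move=> hx hy Hg fp sp fj sj yp yj xp xj.
have := hx i p; have := hx i j; have := hy p i; have := hy j i => *.
apply: (le_trans Hg).
have cp1 : 0 <= y p - y i <= 1 by ab.
have cp2 : -1 <= x p - x i <= 0 by ab.
have cj1 : 0 <= y j - y i <= 1 by ab.
have cj2 : -1 <= x j - x i <= 0 by ab.
apply: le_trans (vp_le (b := 1) (t := x i - x j) (l := y p - y i) (r := 1) _ _ _ _) _;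
  last lra.
- exact: evle1.
- apply: (evle (a := 1 + (x j - x i)) (b := 1)); last lra; last lra; move=> t /andP[t0 t1] V.
  r1 (cT fj sj cj1 V) cj1 cj2 t0 t1.
- apply: (evle (a := 0) (b := y p - y i)); last lra; last lra; move=> t /andP[t0 t1] V.
  r1 (cL fp sp cp2 V) cp2 cp1 t0 t1.
- exact: evle1.
Qed.

Lemma G3c (R : realType) n (y x : 'I_n -> R) (s : {perm 'I_n}) (i p q j : 'I_n) gam :
  (forall a b, x a - x b <= 1) -> (forall a b, y a - y b <= 1) ->
  gam <= sq_gap y x s i ->
  p != i -> (s i < s p)%N -> q != i -> (s i < s q)%N -> j != i -> (s i < s j)%N ->
  y p < y i -> y i < y q -> y j != y i -> x p <= x i -> x q <= x i -> x j <= x i ->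
  gam <= x i - x j.
Proof.
move=> hx hy Hg fp sp fq sq fj sj yp yq yjn xp xq xj.
have := hx i p; have := hx i j; have := hx i q; have := hy q p; have := hy j i;
have := hy i j => *.
apply: (le_trans Hg).
have cp2 : -1 <= x p - x i <= 0 by ab.
have cq2 : -1 <= x q - x i <= 0 by ab.
have cp1 : -1 <= y p - y i <= 0 by ab.
have cq1 : 0 <= y q - y i <= 1 by ab.
have [yjl|yjg|yje] := ltgtP (y j) (y i); last by rewrite yje eqxx in yjn.
- have cj1 : -1 <= y j - y i <= 0 by ab.
  have cj2 : -1 <= x j - x i <= 0 by ab.
  apply: le_trans (vp_le (b := x i - x j) (t := 1) (l := 0) (r := 1) _ _ _ _) _;
    last lra.
  + apply: (evle (a := 1 + (x j - x i)) (b := 1)); last lra; last lra; move=> t /andP[t0 t1] V.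
    r1 (cB fj sj cj1 V) cj1 cj2 t0 t1.
  + exact: evle1.
  + apply: (evle (a := 1 + (y p - y i)) (b := y q - y i)); last lra; last lra; move=> t /andP[t0 t1] V.
    r2 (cL fp sp cp2 V) cp2 cp1 (cL fq sq cq2 V) cq2 cq1 t0 t1.
  + exact: evle1.
- have cj1 : 0 <= y j - y i <= 1 by ab.
  have cj2 : -1 <= x j - x i <= 0 by ab.
  apply: le_trans (vp_le (b := 1) (t := x i - x j) (l := 0) (r := 1) _ _ _ _) _;
    last lra.
  + exact: evle1.
  + apply: (evle (a := 1 + (x j - x i)) (b := 1)); last lra; last lra; move=> t /andP[t0 t1] V.
    r1 (cT fj sj cj1 V) cj1 cj2 t0 t1.
  + apply: (evle (a := 1 + (y p - y i)) (b := y q - y i)); last lra; last lra; move=> t /andP[t0 t1] V.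
    r2 (cL fp sp cp2 V) cp2 cp1 (cL fq sq cq2 V) cq2 cq1 t0 t1.
  + exact: evle1.
Qed.

Definition Fg (R : realType) n (gam : R) (y : 'I_n -> R) (i j : 'I_n) : R :=
  Num.max 0 (gam - (y j - y i)).
Definition Mg (R : realType) n (gam : R) (y : 'I_n -> R) (Q : {set 'I_n}) (i : 'I_n) : R :=
  \big[Num.max/0]_(j in Q | (i < j)%N) Fg gam y i j.
Definition Sg (R : realType) n (gam : R) (y : 'I_n -> R) (Q : {set 'I_n}) : R :=
  \sum_(i in Q) Mg gam y Q i.
Definition mxg (R : realType) n (x : 'I_n -> R) (r : 'I_n) (Q : {set 'I_n}) : R :=
  \big[Num.max/x r]_(i in Q) x i.
Definition mng (R : realType) n (x : 'I_n -> R) (r : 'I_n) (Q : {set 'I_n}) : R :=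
  \big[Num.min/x r]_(i in Q) x i.

Lemma exmax n (P : pred 'I_n) i0 : P i0 -> exists p, P p /\ forall i, P i -> (i <= p)%N.
Proof.
move=> Pi0; case: (arg_maxnP (fun i : 'I_n => val i) Pi0) => p Pp H.
by exists p; split => // i Pi; apply: H.
Qed.

Lemma exmin n (P : pred 'I_n) i0 : P i0 -> exists p, P p /\ forall i, P i -> (p <= i)%N.
Proof.
move=> Pi0; case: (arg_minnP (fun i : 'I_n => val i) Pi0) => p Pp H.
by exists p; split => // i Pi; apply: H.
Qed.

Lemma Fg0 (R : realType) n gam (y : 'I_n -> R) i j : 0 <= Fg gam y i j.
Proof. by rewrite /Fg le_max lexx. Qed.

Lemma Mg0 (R : realType) n gam (y : 'I_n -> R) Q i : 0 <= Mg gam y Q i.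
Proof.
rewrite /Mg; elim/big_ind: _ => //.
  by move=> a b a0 b0; rewrite le_max a0.
by move=> j _; apply: Fg0.
Qed.

Lemma Mg_ge (R : realType) n gam (y : 'I_n -> R) (Q : {set 'I_n}) (i j : 'I_n) :
  j \in Q -> (i < j)%N -> Fg gam y i j <= Mg gam y Q i.
Proof.
move=> jQ ij; rewrite /Mg.
by apply: (@le_bigmax_cond _ _ _ 0 j (fun j => (j \in Q) && (i < j)%N)); rewrite jQ ij.
Qed.

Lemma Mg_le (R : realType) n gam (y : 'I_n -> R) (Q : {set 'I_n}) (i : 'I_n) (c : R) :
  0 <= c -> (forall j, j \in Q -> (i < j)%N -> Fg gam y i j <= c) -> Mg gam y Q i <= c.
Proof.
move=> c0 H; rewrite /Mg; apply: bigmax_le => // j /andP[jQ ij]; exact: H.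
Qed.

Lemma MgUb (R : realType) n gam (y : 'I_n -> R) (Q : {set 'I_n}) b :
  Mg gam y (b |: Q) b = Mg gam y Q b.
Proof.
rewrite /Mg; apply: eq_bigl => j; rewrite in_setU1.
by case: eqP => [->|_]; rewrite ?ltnn ?andbF.
Qed.

Lemma MgU (R : realType) n gam (y : 'I_n -> R) (Q : {set 'I_n}) (b i : 'I_n) :
  b \notin Q -> i != b ->
  Mg gam y (b |: Q) i =
  if (i < b)%N then Num.max (Fg gam y i b) (Mg gam y Q i) else Mg gam y Q i.
Proof.
move=> bQ ib; rewrite /Mg.
case: ifP => ibl.
  rewrite (bigD1 b) /=; last by rewrite setU11 ibl.
  congr (Num.max _ _); apply: eq_bigl => j; rewrite in_setU1.
  by case: eqP => [->|_] /=; rewrite ?(negbTE bQ) ?andbF ?eqxx ?andbT.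
apply: eq_bigl => j; rewrite in_setU1.
case: eqP => [->|_] /=; last by [].
by rewrite ibl (negbTE bQ).
Qed.

Lemma SgU (R : realType) n gam (y : 'I_n -> R) (Q : {set 'I_n}) b :
  b \notin Q ->
  Sg gam y (b |: Q) = Mg gam y Q b + Sg gam y Q +
    \sum_(i in Q) (if (i < b)%N then Num.max (Fg gam y i b) (Mg gam y Q i) - Mg gam y Q i
                   else 0).
Proof.
move=> bQ; rewrite /Sg big_setU1 //= MgUb -addrA; congr (_ + _).
rewrite -big_split /=; apply: eq_bigr => i iQ.
have ib : i != b by apply: contraNneq bQ => <-.
rewrite MgU //; case: ifP => _; first by rewrite addrC subrK.
by rewrite addr0.
Qed.

Lemma mxU (R : realType) n (x : 'I_n -> R) r (Q : {set 'I_n}) b :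
  b \notin Q -> mxg x r (b |: Q) = Num.max (x b) (mxg x r Q).
Proof.
move=> bQ; rewrite /mxg (bigD1 b) ?setU11 //=; congr (Num.max _ _).
apply: eq_bigl => j; rewrite in_setU1.
by case: eqP => [->|_] /=; rewrite ?(negbTE bQ) ?eqxx ?andbF ?andbT.
Qed.

Lemma mnU (R : realType) n (x : 'I_n -> R) r (Q : {set 'I_n}) b :
  b \notin Q -> mng x r (b |: Q) = Num.min (x b) (mng x r Q).
Proof.
move=> bQ; rewrite /mng (bigD1 b) ?setU11 //=; congr (Num.min _ _).
apply: eq_bigl => j; rewrite in_setU1.
by case: eqP => [->|_] /=; rewrite ?(negbTE bQ) ?eqxx ?andbF ?andbT.
Qed.

Lemma mx_ge (R : realType) n (x : 'I_n -> R) r (Q : {set 'I_n}) i :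
  i \in Q -> x i <= mxg x r Q.
Proof. by move=> iQ; rewrite /mxg; apply: (@le_bigmax_cond _ _ _ (x r) i (mem Q)). Qed.

Lemma mn_le (R : realType) n (x : 'I_n -> R) r (Q : {set 'I_n}) i :
  i \in Q -> mng x r Q <= x i.
Proof. by move=> iQ; rewrite /mng; apply: (@bigmin_le_cond _ _ _ (x r) i (mem Q)). Qed.

Lemma mx_att (R : realType) n (x : 'I_n -> R) r (Q : {set 'I_n}) :
  r \in Q -> exists2 j, j \in Q & mxg x r Q = x j.
Proof.
move=> rQ; rewrite /mxg; elim/big_ind: _ => //; first by exists r.
  move=> a b [j jQ ->] [k kQ ->]; case: (leP (x j) (x k)) => h.
    by exists k => //; rewrite max_r.
  by exists j => //; rewrite max_l // ltW.
by move=> i iQ; exists i.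
Qed.

Lemma mn_att (R : realType) n (x : 'I_n -> R) r (Q : {set 'I_n}) :
  r \in Q -> exists2 j, j \in Q & mng x r Q = x j.
Proof.
move=> rQ; rewrite /mng; elim/big_ind: _ => //; first by exists r.
  move=> a b [j jQ ->] [k kQ ->]; case: (leP (x j) (x k)) => h.
    by exists j => //; rewrite min_l.
  by exists k => //; rewrite min_r // ltW.
by move=> i iQ; exists i.
Qed.

Lemma arith1 (R : realType) (g yp yb ys m : R) : yp < yb -> yb < ys -> g <= m -> 0 <= m ->
  Num.max 0 (g - (ys - yb)) + (Num.max (Num.max 0 (g - (yb - yp))) (Num.max 0 (g - (ys - yp)))
  - Num.max 0 (g - (ys - yp))) <= m.
Proof.
move=> *.
repeat match goal with |- context [Num.max ?u ?v] => case: (leP u v) => ? end; lra.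
Qed.

Lemma maxsub_anti (R : realType) (a M M' : R) : M' <= M ->
  Num.max a M - M <= Num.max a M' - M'.
Proof.
move=> *.
repeat match goal with |- context [Num.max ?u ?v] => case: (leP u v) => ? end; lra.
Qed.

Lemma maxsub_le (R : realType) (a M : R) : 0 <= M -> 0 <= a -> Num.max a M - M <= a.
Proof.
move=> *.
repeat match goal with |- context [Num.max ?u ?v] => case: (leP u v) => ? end; lra.
Qed.

Lemma maxsub0 (R : realType) (a M : R) : a <= M -> Num.max a M - M = 0.
Proof. by move=> h; rewrite max_r // subrr. Qed.

Lemma Fg_anti (R : realType) n gam (y : 'I_n -> R) (i j k : 'I_n) :
  y j <= y k -> Fg gam y i k <= Fg gam y i j.
Proof.
move=> h; rewrite /Fg.
repeat match goal with |- context [Num.max ?u ?v] => case: (leP u v) => ? end; lra.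
Qed.

Lemma Fg_le (R : realType) n gam (y : 'I_n -> R) (i j : 'I_n) c :
  gam - (y j - y i) <= c -> 0 <= c -> Fg gam y i j <= c.
Proof. by move=> h1 h2; rewrite /Fg ge_max h1 h2. Qed.

Lemma collapse (R : realType) n (Q : {set 'I_n}) (T : 'I_n -> R) p :
  p \in Q -> (forall i, i \in Q -> i != p -> T i = 0) -> \sum_(i in Q) T i = T p.
Proof.
move=> pQ H; rewrite (bigD1 p) //= big1 ?addr0 // => i /andP[iQ ip]; exact: H.
Qed.

Lemma yinj (R : realType) n (y : 'I_n -> R) :
  (forall a c : 'I_n, (a < c)%N -> y a < y c) -> forall a c : 'I_n, a != c -> y a != y c.
Proof.
move=> hy a c ac; case: (ltngtP a c) => h.
- by rewrite lt_eqF // hy.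
- by rewrite gt_eqF // hy.
- by move: ac; rewrite (val_inj h) eqxx.
Qed.

Lemma combo (R : realType) n (y : 'I_n -> R) (Q : {set 'I_n}) (b j0 : 'I_n) gam m :
  (forall a c : 'I_n, (a < c)%N -> y a < y c) ->
  (forall j, j \in Q -> (j < b)%N \/ (b < j)%N) -> j0 \in Q -> 0 <= m ->
  ((b < j0)%N -> forall p, p \in Q -> (b < p)%N -> gam <= m + (y p - y b)) ->
  ((j0 < b)%N -> forall p, p \in Q -> (p < b)%N -> gam <= m + (y b - y p)) ->
  (forall p q, p \in Q -> q \in Q -> (p < b)%N -> (b < q)%N -> gam <= m) ->
  Mg gam y Q b + \sum_(i in Q) (if (i < b)%N then
     Num.max (Fg gam y i b) (Mg gam y Q i) - Mg gam y Q i else 0) <= m.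
Proof.
move=> hmon tri j0Q m0 HA HB HC.
have termp : forall p, p \in Q -> (p < b)%N -> (forall i, i \in Q -> (i < b)%N -> (i <= p)%N) ->
    \sum_(i in Q) (if (i < b)%N then
     Num.max (Fg gam y i b) (Mg gam y Q i) - Mg gam y Q i else 0) =
    Num.max (Fg gam y p b) (Mg gam y Q p) - Mg gam y Q p.
  move=> p pQ pb pmax; rewrite (collapse (p := p)) ?pb // => i iQ ip.
  case: ifP => // ib; apply: maxsub0.
  have ipl : (i < p)%N by rewrite ltn_neqAle pmax // andbT; apply: contra ip => /eqP h; apply/eqP/val_inj.
  apply: le_trans (Mg_ge _ _ pQ ipl); apply: Fg_anti; exact: ltW (hmon _ _ pb).
case Eb: [exists i in Q, (i < b)%N]; case Ea: [exists j in Q, (b < j)%N].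
- move/existsP: Eb => [i0 /andP[i0Q i0b]]; move/existsP: Ea => [k0 /andP[k0Q k0b]].
  have [p [/andP[pQ pb] pmax]] := exmax (P := fun i => (i \in Q) && (i < b)%N) (i0 := i0)
    (introT andP (conj i0Q i0b)).
  have [q [/andP[qQ bq] qmin]] := exmin (P := fun i => (i \in Q) && (b < i)%N) (i0 := k0)
    (introT andP (conj k0Q k0b)).
  rewrite (termp p pQ pb); last by move=> i iQ ib; apply: pmax; rewrite iQ ib.
  have pq : (p < q)%N := ltn_trans pb bq.
  apply: le_trans (_ : Fg gam y b q + (Num.max (Fg gam y p b) (Fg gam y p q) - Fg gam y p q) <= _).
    apply: lerD.
      apply: Mg_le; first exact: Fg0.
      move=> j jQ bj; apply: Fg_anti; have := qmin j; rewrite jQ bj => /(_ isT).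
      rewrite leq_eqVlt => /orP[/eqP h|h]; last exact: ltW (hmon _ _ h).
      by rewrite (val_inj h).
    apply: maxsub_anti; exact: Mg_ge.
  rewrite /Fg; apply: arith1 => //; [exact: hmon|exact: hmon|exact: HC pQ qQ pb bq].
- move/existsP: Eb => [i0 /andP[i0Q i0b]].
  have [p [/andP[pQ pb] pmax]] := exmax (P := fun i => (i \in Q) && (i < b)%N) (i0 := i0)
    (introT andP (conj i0Q i0b)).
  have noab : forall j, j \in Q -> (b < j)%N -> False.
    by move=> j jQ bj; move/negbT/existsP: Ea; apply; exists j; rewrite jQ bj.
  rewrite (termp p pQ pb); last by move=> i iQ ib; apply: pmax; rewrite iQ ib.
  have M0 : Mg gam y Q b <= 0 by apply: Mg_le => // j jQ bj; case: (noab j jQ bj).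
  have j0b : (j0 < b)%N by case: (tri j0 j0Q) => // h; case: (noab j0 j0Q h).
  have := maxsub_le (Mg0 gam y Q p) (Fg0 gam y p b).
  have : Fg gam y p b <= m by apply: Fg_le => //; have := HB j0b p pQ pb; lra.
  lra.
- have nobe : forall j, j \in Q -> (j < b)%N -> False.
    by move=> j jQ bj; move/negbT/existsP: Eb; apply; exists j; rewrite jQ bj.
  have j0b : (b < j0)%N by case: (tri j0 j0Q) => // h; case: (nobe j0 j0Q h).
  rewrite big1 => [|i iQ]; last by case: ifP => // ib; case: (nobe i iQ ib).
  rewrite addr0; apply: Mg_le => // j jQ bj; apply: Fg_le => //.
  have := HA j0b j jQ bj; lra.
- by case: (tri j0 j0Q) => h; [move/negbT/existsP: Eb|move/negbT/existsP: Ea]; case; exists j0;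
    rewrite j0Q h.
Qed.

Lemma local (R : realType) n (y x : 'I_n -> R) (s : {perm 'I_n}) (Q : {set 'I_n})
    (b r : 'I_n) gam :
  (forall a c, x a - x c <= 1) -> (forall a c, y a - y c <= 1) ->
  (forall a c : 'I_n, (a < c)%N -> y a < y c) ->
  b \notin Q -> r \in Q -> (forall j, j \in Q -> (s b < s j)%N) ->
  gam <= sq_gap y x s b ->
  Sg gam y (b |: Q) - Sg gam y Q <=
    (mxg x r (b |: Q) - mng x r (b |: Q)) - (mxg x r Q - mng x r Q).
Proof.
move=> hx hy hmon bQ rQ hs Hg.
have nb : forall j, j \in Q -> j != b by move=> j jQ; apply: contraNneq bQ => <-.
have yn : forall j, j \in Q -> y j != y b by move=> j jQ; apply: yinj => //; exact: nb.
have tri : forall j, j \in Q -> (j < b)%N \/ (b < j)%N.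
  move=> j jQ; case: (ltngtP j b) => h; [by left|by right|].
  by move: (nb j jQ); rewrite (val_inj h) eqxx.
rewrite SgU // mxU // mnU //.
set MX := mxg x r Q; set MN := mng x r Q.
have MNX : MN <= MX by apply: le_trans (mn_le _ _ rQ) (mx_ge _ _ rQ).
set D := \sum_(i in Q) _.
have h1 := le_max (x b) (x b) MX; have h2 := le_max MX (x b) MX.
have h3 := ge_min (x b) (x b) MN; have h4 := ge_min MN (x b) MN.
rewrite lexx orbT in h2; rewrite lexx in h1; rewrite lexx in h3; rewrite lexx orbT in h4.
have D0 : 0 <= D.
  rewrite /D; apply: sumr_ge0 => i _; case: ifP => // _.
  by rewrite subr_ge0 le_max lexx orbT.
case Ex1: [exists j in Q, x j <= x b]; case Ex2: [exists k in Q, x b <= x k].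
-
  move/existsP: Ex1 => [j /andP[jQ xj]]; move/existsP: Ex2 => [k /andP[kQ xk]].
  have above : forall i, i \in Q -> (b < i)%N -> gam <= y i - y b.
    move=> i iQ bi; have yb := hmon _ _ bi.
    case: (lerP (x i) (x b)) => xi.
      by apply: (G_above hx hy Hg (nb i iQ) (hs i iQ) (nb k kQ) (hs k kQ) yb (yn k kQ));
        left; rewrite xi xk.
    by apply: (G_above hx hy Hg (nb i iQ) (hs i iQ) (nb j jQ) (hs j jQ) yb (yn j jQ));
      right; rewrite xj ltW.
  have below : forall i, i \in Q -> (i < b)%N -> gam <= y b - y i.
    move=> i iQ bi; have yb := hmon _ _ bi.
    case: (lerP (x i) (x b)) => xi.
      by apply: (G_below hx hy Hg (nb i iQ) (hs i iQ) (nb k kQ) (hs k kQ) yb (yn k kQ));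
        left; rewrite xi xk.
    by apply: (G_below hx hy Hg (nb i iQ) (hs i iQ) (nb j jQ) (hs j jQ) yb (yn j jQ));
      right; rewrite xj ltW.
  have M0 : Mg gam y Q b <= 0.
    apply: Mg_le => // i iQ bi; apply: Fg_le => //; have := above i iQ bi; lra.
  have DD : D = 0.
    rewrite /D big1 // => i iQ; case: ifP => // ib; apply: maxsub0.
    apply: le_trans (Mg0 _ _ _ _); apply: Fg_le => //; have := below i iQ ib; lra.
  rewrite DD; lra.
-
  have alll : forall j, j \in Q -> x j < x b.
    move=> j jQ; rewrite ltNge; apply/negP => h; move/negbT/existsP: Ex2; apply; exists j.
    by rewrite jQ h.
  case: (mx_att x rQ) => j0 j0Q MXe.
  have eMX : MX = x j0 := MXe.
  have emax : Num.max (x b) MX = x b by rewrite max_l // eMX ltW // alll.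
  have emin : Num.min (x b) MN = MN by rewrite min_r // (le_trans MNX) // eMX ltW // alll.
  rewrite emax emin.
  suff : Mg gam y Q b + D <= x b - x j0 by lra.
  apply: (combo (j0 := j0)) => //.
  + have := alll j0 j0Q; lra.
  + move=> bj0 p pQ bp.
    have := G3b hx hy Hg (nb p pQ) (hs p pQ) (nb j0 j0Q) (hs j0 j0Q) (hmon _ _ bp)
      (hmon _ _ bj0) (ltW (alll p pQ)) (ltW (alll j0 j0Q)); lra.
  + move=> j0b p pQ pb.
    have := G3a hx hy Hg (nb p pQ) (hs p pQ) (nb j0 j0Q) (hs j0 j0Q) (hmon _ _ pb)
      (hmon _ _ j0b) (ltW (alll p pQ)) (ltW (alll j0 j0Q)); lra.
  + move=> p q pQ qQ pb bq.
    exact: (G3c hx hy Hg (nb p pQ) (hs p pQ) (nb q qQ) (hs q qQ) (nb j0 j0Q) (hs j0 j0Q)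
      (hmon _ _ pb) (hmon _ _ bq) (yn j0 j0Q) (ltW (alll p pQ)) (ltW (alll q qQ))
      (ltW (alll j0 j0Q))).
-
  have allr : forall j, j \in Q -> x b < x j.
    move=> j jQ; rewrite ltNge; apply/negP => h; move/negbT/existsP: Ex1; apply; exists j.
    by rewrite jQ h.
  case: (mn_att x rQ) => j0 j0Q MNe.
  have eMN : MN = x j0 := MNe.
  have emax : Num.max (x b) MX = MX.
    by rewrite max_r // ltW // (lt_le_trans (allr j0 j0Q)) // -eMN.
  have emin : Num.min (x b) MN = x b by rewrite min_l // eMN ltW // allr.
  rewrite emax emin.
  suff : Mg gam y Q b + D <= x j0 - x b by lra.
  apply: (combo (j0 := j0)) => //.
  + have := allr j0 j0Q; lra.
  + move=> bj0 p pQ bp.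
    have := G2b hx hy Hg (nb p pQ) (hs p pQ) (nb j0 j0Q) (hs j0 j0Q) (hmon _ _ bp)
      (hmon _ _ bj0) (ltW (allr p pQ)) (ltW (allr j0 j0Q)); lra.
  + move=> j0b p pQ pb.
    have := G2a hx hy Hg (nb p pQ) (hs p pQ) (nb j0 j0Q) (hs j0 j0Q) (hmon _ _ pb)
      (hmon _ _ j0b) (ltW (allr p pQ)) (ltW (allr j0 j0Q)); lra.
  + move=> p q pQ qQ pb bq.
    exact: (G2c hx hy Hg (nb p pQ) (hs p pQ) (nb q qQ) (hs q qQ) (nb j0 j0Q) (hs j0 j0Q)
      (hmon _ _ pb) (hmon _ _ bq) (yn j0 j0Q) (ltW (allr p pQ)) (ltW (allr q qQ))
      (ltW (allr j0 j0Q))).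
- exfalso; move/existsP: Ex1 => Ex1; apply: Ex1; exists r; rewrite rQ /=.
  move/existsP: Ex2 => Ex2; case: (lerP (x r) (x b)) => // h.
  by exfalso; apply: Ex2; exists r; rewrite rQ ltW.
Qed.

Definition Qk n (s : {perm 'I_n}) (k : nat) : {set 'I_n} := [set i | (k <= s i)%N].

Lemma gap_le (R : realType) n (y x : 'I_n -> R) s gam :
  layout_gap y x s = gam%:E -> forall i, gam <= sq_gap y x s i.
Proof.
move=> E i; have := @bigmin_le _ _ 'I_n (+oo%E) i (fun i => (sq_gap y x s i)%:E).
by rewrite -/(layout_gap y x s) E lee_fin.
Qed.

Lemma sum_sub_le (R : realType) n (P : pred 'I_n) (f : 'I_n -> R) :
  (forall i, 0 <= f i) -> \sum_(i | P i) f i <= \sum_i f i.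
Proof.
move=> f0; rewrite [X in _ <= X](bigID P) /= lerDl; exact: sumr_ge0.
Qed.

Lemma part1 (R : realType) (w h : R) (n : nat) (y : 'I_n -> R) :
  1 < w <= 2 -> 1 < h <= 2 -> (2 <= n)%N ->
  (forall i : 'I_n, 2^-1 <= y i <= h - 2^-1) ->
  (forall i j : 'I_n, (i < j)%N -> y i < y j) ->
  (forall (x : 'I_n -> R) (s : {perm 'I_n}) (gam : R),
     is_layout w x -> reasonable y x s -> layout_gap y x s = gam%:E ->
     exists (g : R) (dx : 'I_n -> R), lp_feasible y w g dx /\ gam <= g).
Proof.
move=> /andP[w1 w2] /andP[h1 h2] n2 yb hmon x s gam lay _ E.
have Hg := gap_le E.
have hx : forall a c, x a - x c <= 1.
  move=> a c; have := lay a; have := lay c => /andP[? ?] /andP[? ?]; lra.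
have hy : forall a c, y a - y c <= 1.
  move=> a c; have := yb a; have := yb c => /andP[? ?] /andP[? ?]; lra.
have n1 : (n.-1 < n)%N by rewrite prednK ?leqnn // (leq_trans _ n2).
set r := (s^-1)%g (Ordinal n1).
have sr : s r = Ordinal n1 by rewrite /r permKV.
have rQ : forall k, (k <= n.-1)%N -> r \in Qk s k by move=> k kn; rewrite inE sr.
have key : forall d, (d <= n.-1)%N ->
    Sg gam y (Qk s (n.-1 - d)) <=
    mxg x r (Qk s (n.-1 - d)) - mng x r (Qk s (n.-1 - d)).
  elim=> [_|d IH dn].
    rewrite subn0.
    have sp : 0 <= mxg x r (Qk s n.-1) - mng x r (Qk s n.-1).
      have := mx_ge x r (rQ _ (leqnn _)); have := mn_le x r (rQ _ (leqnn _)); lra.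
    apply: le_trans sp; rewrite /Sg; apply: sumr_le0 => i iQ.
    apply: Mg_le => // j jQ ij; exfalso.
    move: iQ jQ; rewrite !inE => iQ jQ.
    have : (s j <= n.-1)%N by rewrite -ltnS prednK ?ltn_ord // (leq_trans _ n2).
    have : (s i <= n.-1)%N by rewrite -ltnS prednK ?ltn_ord // (leq_trans _ n2).
    move=> a b.
    have ei : val (s i) = n.-1 by apply/eqP; rewrite eqn_leq a iQ.
    have ej : val (s j) = n.-1 by apply/eqP; rewrite eqn_leq b jQ.
    have : s i = s j by apply: val_inj; rewrite ei ej.
    move/perm_inj => eij; by rewrite eij ltnn in ij.
  have IH' := IH (ltnW dn).
  set k := (n.-1 - d.+1)%N.
  have kk : (n.-1 - d = k.+1)%N by rewrite /k subnS prednK // subn_gt0.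
  have kn : (k < n)%N by rewrite /k (leq_ltn_trans (leq_subr _ _) n1).
  set b := (s^-1)%g (Ordinal kn).
  have sb : s b = Ordinal kn by rewrite /b permKV.
  have QU : Qk s k = b |: Qk s k.+1.
    apply/setP => i; rewrite !inE.
    rewrite leq_eqVlt; case: (eqVneq i b) => [->|ib] /=.
      by rewrite sb eqxx.
    suff -> : (k == s i) = false by [].
    apply/negbTE/eqP => h'; move/eqP: ib; apply; rewrite /b.
    have : s i = Ordinal kn by apply: val_inj; rewrite /= -h'.
    by move=> <-; rewrite permK.
  rewrite kk in IH'.
  have bQ : b \notin Qk s k.+1 by rewrite inE sb /= ltnn.
  have hs : forall j, j \in Qk s k.+1 -> (s b < s j)%N by move=> j; rewrite inE sb.
  have kr : (k.+1 <= n.-1)%N by rewrite -kk leq_subr.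
  have L := local hx hy hmon bQ (rQ k.+1 kr) hs (Hg b).
  rewrite QU; lra.
have := key n.-1 (leqnn _); rewrite subnn => K.
set Q0 := Qk s 0 in K.
have inQ0 : forall i, i \in Q0 by move=> i; rewrite inE.
exists gam, (fun i => Mg gam y Q0 i); split => //; split.
  move=> i j ij; split; last exact: Mg0.
  have ij' : (i < j)%N by rewrite ij.
  have := Mg_ge gam y (inQ0 j) ij'; rewrite /Fg => H.
  have H2 : gam - (y j - y i) <= Num.max 0 (gam - (y j - y i)) by rewrite le_max lexx orbT.
  lra.
apply: le_trans (sum_sub_le _ (fun i => Mg0 gam y Q0 i)) _.
have -> : \sum_i Mg gam y Q0 i = Sg gam y Q0 by rewrite /Sg; apply: eq_bigl => i; rewrite inQ0.
apply: le_trans K _.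
case: (mx_att x (rQ 0 (leq0n _))) => j _ ->; case: (mn_att x (rQ 0 (leq0n _))) => k _ ->.
have := lay j; have := lay k => /andP[? ?] /andP[? ?]; lra.
Qed.

Lemma vis1 (R : realType) n (y x : 'I_n -> R) (i : 'I_n) p :
  (forall j : 'I_n, (i < j)%N -> in_square (x j) (y j) p -> False) ->
  visible y x 1%g i p.
Proof.
move=> H j ji hin; rewrite !perm1.
case: (ltngtP j i) => // h; first by case: (H j h hin).
by move: ji; rewrite (val_inj h) eqxx.
Qed.

Lemma insq (R : realType) (cx cy : R) p :
  in_square cx cy p -> -(2^-1) <= p.1 - cx <= 2^-1 /\ -(2^-1) <= p.2 - cy <= 2^-1.
Proof. by rewrite /in_square !ler_norml. Qed.

Lemma gap_stair (R : realType) n (y x : 'I_n -> R) (i : 'I_n) (ex ey : R) :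
  0 <= ex <= 1 -> 0 <= ey <= 1 ->
  (forall j : 'I_n, (i < j)%N -> y i < y j /\ x i < x j /\ ex <= x j - x i /\ ey <= y j - y i) ->
  ex + ey <= sq_gap y x 1%g i.
Proof.
move=> /andP[ex0 ex1] /andP[ey0 ey1] H.
apply: le_trans (vp_ge (b := 1) (t := ex) (l := 1) (r := ey) _ _ _ _); first lra.
- rewrite -[X in X%:E](subr0 1); apply: em_ge => // t /andP[t0 t1].
  split; first by rewrite t0 ltW.
  apply: vis1 => j ij /insq [_]; rewrite /eB /=; case: (H j ij) => ? _ /andP[? ?]; lra.
- rewrite -[X in X%:E](subr0 ex); apply: em_ge => // t /andP[t0 t1].
  split; first by rewrite t0 /=; lra.
  apply: vis1 => j ij /insq [+ _]; rewrite /eT /=; case: (H j ij) => ? [? [? ?]] /andP[? ?]; lra.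
- rewrite -[X in X%:E](subr0 1); apply: em_ge => // t /andP[t0 t1].
  split; first by rewrite t0 ltW.
  apply: vis1 => j ij /insq [+ _]; rewrite /eL /=; case: (H j ij) => ? [? _] /andP[? ?]; lra.
- rewrite -[X in X%:E](subr0 ey); apply: em_ge => // t /andP[t0 t1].
  split; first by rewrite t0 /=; lra.
  apply: vis1 => j ij /insq [_]; rewrite /eR /=; case: (H j ij) => ? [? [? ?]] /andP[? ?]; lra.
Qed.

Lemma part2 (R : realType) (w h : R) (n : nat) (y : 'I_n -> R) :
  1 < w <= 2 -> 1 < h <= 2 -> (2 <= n)%N ->
  (forall i : 'I_n, 2^-1 <= y i <= h - 2^-1) ->
  (forall i j : 'I_n, (i < j)%N -> y i < y j) ->
  (forall (g : R) (dx : 'I_n -> R), lp_feasible y w g dx ->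
     forall delta : R, 0 < delta ->
     exists (x : 'I_n -> R) (s : {perm 'I_n}),
       [/\ is_layout w x, proper_staircase x s &
           ((g - delta)%:E <= layout_gap y x s)%E]).
Proof.
move=> /andP[w1 w2] /andP[h1 h2] n2 yb hmon g dx [Hf Hs] delta d0.
have hy : forall a c, y a - y c <= 1.
  move=> a c; have := yb a; have := yb c => /andP[? ?] /andP[? ?]; lra.
have n0 : (0 < n)%N by apply: leq_trans n2.
set P := fun k : 'I_n => (k.+1 < n)%N.
have dx0 : forall k : 'I_n, P k -> 0 <= dx k.
  move=> k Pk; exact: (Hf k (Ordinal Pk) erefl).2.
have dx1 : forall k : 'I_n, P k -> dx k <= w - 1.
  move=> k Pk; apply: le_trans Hs; rewrite (bigD1 k) //= lerDl.
  by apply: sumr_ge0 => i /andP[Pi _]; exact: dx0.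
set th := 2^-1 * Num.min delta 1.
have th0 : 0 < th by rewrite /th mulr_gt0 // lt_min d0 ltr01.
have thd : th < delta.
  rewrite /th; have := ge_min delta delta 1; rewrite lexx /= => hm; lra.
have th1 : th <= 2^-1.
  rewrite /th; have := ge_min 1 delta 1; rewrite lexx orbT => hm; lra.
set c := (w - 1) / n%:R.
have c0 : 0 < c by rewrite /c divr_gt0 ?ltr0n // subr_gt0.
have cn : \sum_(k < n) c = w - 1.
  by rewrite sumr_const card_ord -mulr_natr /c divfK // pnatr_eq0 -lt0n.
set e := fun k : 'I_n => if P k then (1 - th) * dx k + th * c else 0.
have e0 : forall k, 0 <= e k.
  move=> k; rewrite /e; case: ifP => // Pk.
  apply: addr_ge0; [apply: mulr_ge0; [lra|exact: dx0]|apply: mulr_ge0; lra].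
have epos : forall k, P k -> 0 < e k.
  move=> k Pk; rewrite /e Pk; apply: ltr_pwDr; first exact: mulr_gt0.
  apply: mulr_ge0; [lra|exact: dx0].
have esum : \sum_k e k <= w - 1.
  rewrite /e -big_mkcond /= big_split /= -mulr_sumr -mulr_sumr.
  have : \sum_(i | P i) c <= w - 1 by rewrite -cn; apply: sum_sub_le => _; exact: ltW.
  have : \sum_(i | P i) dx i <= w - 1 by [].
  move=> A B.
  have th1' : 0 <= 1 - th by lra.
  have := ler_wpM2l th1' A; have := ler_wpM2l (ltW th0) B.
  lra.
have ele : forall k, P k -> dx k - delta <= e k.
  move=> k Pk; rewrite /e Pk.
  have : th * dx k <= th * 1 by apply: ler_wpM2l; [exact: ltW| have := dx1 k Pk; lra].
  have : 0 <= th * c by apply: mulr_ge0; lra.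
  lra.
set x := fun i : 'I_n => 2^-1 + \sum_(k : 'I_n | (k < i)%N) e k.
have xdiff : forall i j : 'I_n, (i < j)%N -> e i <= x j - x i.
  move=> i j ij; rewrite /x.
  rewrite (bigID (fun k : 'I_n => (k < i)%N)) /=.
  have -> : \sum_(k : 'I_n | (k < j)%N && (k < i)%N) e k = \sum_(k : 'I_n | (k < i)%N) e k.
    by apply: eq_bigl => k; case: (ltnP k i) => ki; rewrite ?andbF ?andbT // (ltn_trans ki ij).
  rewrite (@bigD1 _ _ _ _ i (fun k : 'I_n => (k < j)%N && ~~ (k < i)%N)) /=; last by rewrite ij ltnn.
  have : 0 <= \sum_(i0 : 'I_n | ((i0 < j)%N && ~~ (i0 < i)%N) && (i0 != i)) e i0 by apply: sumr_ge0.
  lra.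
have xlay : is_layout w x.
  move=> i; rewrite /x; apply/andP; split.
    have : 0 <= \sum_(k : 'I_n | (k < i)%N) e k by apply: sumr_ge0.
    lra.
  have := sum_sub_le (fun k : 'I_n => (k < i)%N) e0; lra.
have ele1 : forall k, e k <= 1.
  move=> k; apply: le_trans (_ : w - 1 <= 1); last lra.
  apply: le_trans esum; rewrite (bigD1 k) //= lerDl; exact: sumr_ge0.
exists x, 1%g; split => //.
  move=> i j ij; split; last by rewrite !perm1.
  have := xdiff i j ij; have Pi : P i by rewrite /P (leq_ltn_trans ij).
  have := epos i Pi; lra.
apply: le_bigmin => [|i _]; first exact: leey.
rewrite lee_fin.
case: (ltnP i.+1 n) => hi.
  set j1 := Ordinal hi.
  have [Hg _] := Hf i j1 erefl.
  have yij : y i < y j1 by apply: hmon; rewrite /= ltnSn.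
  apply: le_trans (gap_stair (ex := e i) (ey := y j1 - y i) _ _ _).
  - have := ele i hi; lra.
  - by rewrite e0 ele1.
  - apply/andP; split; [lra|exact: hy].
  - move=> j ij; split; first exact: hmon.
    have Pi : P i by [].
    have := xdiff i j ij; have := epos i Pi => ? ?; split; first lra.
    split; first lra.
    have : y j1 <= y j.
      have : (j1 <= j)%N by [].
      rewrite leq_eqVlt => /orP[/eqP e1|e1]; last exact: ltW (hmon _ _ e1).
      by rewrite (val_inj e1).
    lra.
- have i0 : (0 < n)%N := n0.
  have o1 : (1 < n)%N := n2.
  have [Hg0 _] := Hf (Ordinal i0) (Ordinal o1) erefl.
  have P0 : P (Ordinal i0) by [].
  have := dx1 _ P0; have := hy (Ordinal o1) (Ordinal i0) => ? ?.
  apply: le_trans (gap_stair (ex := 1) (ey := 1) _ _ _); first lra.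
  - by rewrite ler01 lexx.
  - by rewrite ler01 lexx.
  - move=> j ij; exfalso; have := ltn_ord j; rewrite ltnNge.
    by rewrite (leq_trans hi ij).
Qed.

Unset Implicit Arguments.
Theorem lemma6 (R : realType) (w h : R) (n : nat) (y : 'I_n -> R) :
  1 < w <= 2 -> 1 < h <= 2 -> (2 <= n)%N ->
  (forall i : 'I_n, 2^-1 <= y i <= h - 2^-1) ->
  (forall i j : 'I_n, (i < j)%N -> y i < y j) ->
  (forall (x : 'I_n -> R) (s : {perm 'I_n}) (gam : R),
     is_layout w x -> reasonable y x s -> layout_gap y x s = gam%:E ->
     exists (g : R) (dx : 'I_n -> R), lp_feasible y w g dx /\ gam <= g) /\
  (forall (g : R) (dx : 'I_n -> R), lp_feasible y w g dx ->
     forall delta : R, 0 < delta ->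
     exists (x : 'I_n -> R) (s : {perm 'I_n}),
       [/\ is_layout w x, proper_staircase x s &
           ((g - delta)%:E <= layout_gap y x s)%E]).
Proof.
move=> w1 h1 n2 hy hmon.
split; [exact: (part1 w1 h1 n2 hy hmon) | exact: (part2 w1 h1 n2 hy hmon)].
Qed.
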